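(* Let $\mathcal{S}$ be a temporal feedback graph on $T$ rounds with maximal orders $C_1,\dots,C_N$, and let $\boldsymbol\mu^*$ be an optimal solution to the upper bound dual program (maximize $\sum_t\mu_t$ s.t. $\sum_{t\in C_c}\mu_t^2\le1$ for all $c$, $\mu\ge0$). Then there exists an optimal solution $\boldsymbol\lambda^*$ to the upper bound program (minimize $\sum_{c}\sqrt{\sum_{t\in C_c}\lambda_{c,t}^2}$ s.t. $\sum_c\lambda_{c,t}=1$ for all $t$, $\lambda_{c,t}=0$ if $t\notin C_c$, $\lambda\ge0$) such that: for every $c\in[N]$ with $\sum_{t\in C_c}(\mu^*_t)^2<1$ we have $\lambda^*_{c,t}=0$ for all $t\in[T]$, and for every $c\in[N]$ with $\sum_{t\in C_c}(\mu^*_t)^2=1$ there is a constant $\rho_c$ with $\lambda^*_{c,t}=\rho_c\mu^*_t$ for all $t$ (in $C_c$).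
   Context: A temporal feedback graph $\mathcal{S}$ is a collection of subsets $S_t\subseteq[T]\setminus\{t\}$, $t\in[T]$. A sequence of rounds $t_1,\dots,t_w$ is an order if $t_u\in S_{t_v}$ for all $u<v$; it is maximal if no super-sequence of it is an order. *)

(* Defs.v *)
From HB Require Import structures.
From mathcomp Require Import all_boot all_order all_algebra.
From mathcomp Require Import reals.
Set Implicit Arguments. Unset Strict Implicit. Unset Printing Implicit Defensive.
Import Order.TTheory GRing.Theory Num.Theory.
Local Open Scope ring_scope.

Definition temporal_feedback_graph (T : nat) (S : 'I_T -> {set 'I_T}) : Prop :=
  forall t : 'I_T, t \notin S t.

Definition is_order (T : nat) (S : 'I_T -> {set 'I_T}) (s : seq 'I_T) : Prop :=
  pairwise (fun a b => a \in S b) s.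

Definition maximal_order (T : nat) (S : 'I_T -> {set 'I_T}) (s : seq 'I_T) : Prop :=
  is_order S s /\
  forall s' : seq 'I_T, is_order S s' -> subseq s s' -> s' = s.

Definition dual_feasible (R : realType) (T N : nat) (C : 'I_N -> seq 'I_T)
  (mu : 'I_T -> R) : Prop :=
  (forall t, 0 <= mu t) /\
  (forall c, \sum_(t : 'I_T | t \in C c) mu t ^+ 2 <= 1).

Definition dual_optimal (R : realType) (T N : nat) (C : 'I_N -> seq 'I_T)
  (mu : 'I_T -> R) : Prop :=
  dual_feasible C mu /\
  (forall mu' : 'I_T -> R, dual_feasible C mu' ->
     \sum_(t : 'I_T) mu' t <= \sum_(t : 'I_T) mu t).

Definition primal_feasible (R : realType) (T N : nat) (C : 'I_N -> seq 'I_T)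
  (lam : 'I_N -> 'I_T -> R) : Prop :=
  (forall t, \sum_(c : 'I_N) lam c t = 1) /\
  (forall c t, t \notin C c -> lam c t = 0) /\
  (forall c t, 0 <= lam c t).

Definition primal_obj (R : realType) (T N : nat) (C : 'I_N -> seq 'I_T)
  (lam : 'I_N -> 'I_T -> R) : R :=
  \sum_(c : 'I_N) Num.sqrt (\sum_(t : 'I_T | t \in C c) lam c t ^+ 2).

Definition primal_optimal (R : realType) (T N : nat) (C : 'I_N -> seq 'I_T)
  (lam : 'I_N -> 'I_T -> R) : Prop :=
  primal_feasible C lam /\
  (forall lam' : 'I_N -> 'I_T -> R, primal_feasible C lam' ->
     primal_obj C lam <= primal_obj C lam').

(* Main.v *)
Require Import Defs.
From HB Require Import structures.
From mathcomp Require Import all_boot all_order all_algebra.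
From mathcomp Require Import reals.
From mathcomp Require Import ring lra.
From Stdlib Require Import Classical.
Import Order.TTheory GRing.Theory Num.Theory.
Local Open Scope ring_scope.


Definition dot {R : realFieldType} {n} (y v : 'I_n -> R) := \sum_t y t * v t.

Lemma dot_lin2 (R : realFieldType) n (y v x : 'I_n -> R) (u w : R) :
  dot y (fun t => u * v t + w * x t) = u * dot y v + w * dot y x.
Proof.
rewrite /dot !mulr_sumr -big_split /=; apply: eq_bigr => t _; ring.
Qed.

Lemma dot_lin1 (R : realFieldType) n (y v x : 'I_n -> R) (u w : R) :
  dot (fun t => u * v t + w * x t) y = u * dot v y + w * dot x y.
Proof.
rewrite /dot !mulr_sumr -big_split /=; apply: eq_bigr => t _; ring.
Qed.

Lemma widen_lift m (i : 'I_m) : widen_ord (leqnSn m) i = lift ord_max i.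
Proof. by apply: val_inj; rewrite /= /bump leqNgt ltn_ord. Qed.

Lemma farkas (R : realFieldType) n m (a : 'I_m -> 'I_n -> R) (b : 'I_n -> R) :
  (forall y : 'I_n -> R, (forall i, dot y (a i) <= 0) -> dot y b <= 0) ->
  exists rho : 'I_m -> R, (forall i, 0 <= rho i) /\
     forall t, b t = \sum_i rho i * a i t.
Proof.
elim: m a b => [|m IH] a b H.
  exists (fun _ => 0); split => // t; rewrite big_ord0.
  have := H b (fun i => match i with Ordinal _ h => False_ind _ (notF h) end).
  rewrite /dot => Hb.
  have H0 : \sum_t b t * b t = 0.
    apply/eqP; rewrite eq_le Hb /=; apply: sumr_ge0 => i _; by rewrite -expr2 sqr_ge0.
  have := psumr_eq0P (fun i _ => (ltac:(rewrite -expr2; exact: sqr_ge0) : 0 <= b i * b i)) H0 (i:=t) isT.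
  by move/eqP; rewrite mulf_eq0 orbb => /eqP.
pose a' := fun i : 'I_m => a (widen_ord (leqnSn m) i).
pose am := a ord_max.
case: (classic (exists rho : 'I_m -> R, (forall i, 0 <= rho i) /\
     forall t, b t = \sum_i rho i * a' i t)) => [[rho [rho0 Hrho]]|Hno].
  exists (fun i : 'I_m.+1 => if unlift ord_max i is Some j then rho j else 0).
  split.
    by move=> i; case: unliftP => [j _|_] //.
  move=> t; rewrite big_ord_recr /= unlift_none mul0r addr0 Hrho.
  apply: eq_bigr => i _.
  by rewrite /a' widen_lift liftK.
have [y' [Hy'1 Hy'2]] : exists y', (forall i, dot y' (a' i) <= 0) /\ 0 < dot y' b.
  apply: NNPP => Hc; apply: Hno; apply: IH => y Hy.
  rewrite leNgt; apply/negP => Hlt; apply: Hc; by exists y.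
set al := dot y' am.
have Hal : 0 < al.
  rewrite ltNge; apply/negP => Hle.
  have : dot y' b <= 0.
    apply: H => i; case: (unliftP ord_max i) => [j ->|->].
      have -> : lift ord_max j = widen_ord (leqnSn m) j by rewrite widen_lift.
      exact: Hy'1.
    exact: Hle.
  by rewrite leNgt Hy'2.
set ga := dot y' b.
pose a2 := fun i : 'I_m => fun t => al * a' i t + (- dot y' (a' i)) * am t.
pose b2 := fun t => al * b t + (- ga) * am t.
have [rho [rho0 Hrho]] : exists rho : 'I_m -> R, (forall i, 0 <= rho i) /\
     forall t, b2 t = \sum_i rho i * a2 i t.
  apply: IH => y2 Hy2.
  pose y := fun t => 1 * y2 t + (- (dot y2 am / al)) * y' t.
  have Hya : forall v, dot y v = dot y2 v - dot y2 am / al * dot y' v.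
    by move=> v; rewrite /y dot_lin1 mul1r mulNr.
  have Hyb : dot y b <= 0.
    apply: H => i; case: (unliftP ord_max i) => [j ->|->].
      have -> : lift ord_max j = widen_ord (leqnSn m) j by rewrite widen_lift.
      have := Hy2 j; rewrite /a2 dot_lin2 Hya -/(a' j).
      move=> h.
      have e : dot y2 (a' j) - dot y2 am / al * dot y' (a' j) =
           (al * dot y2 (a' j) + - dot y' (a' j) * dot y2 am) / al.
        by field; rewrite gt_eqF.
      rewrite e; apply: mulr_le0_ge0 => //; rewrite invr_ge0 ltW //.
    rewrite Hya -/am -/al.
    have -> : dot y2 am - dot y2 am / al * al = 0 by field; rewrite gt_eqF.
    done.
  rewrite /b2 dot_lin2.
  have e : dot y2 b - dot y2 am / al * dot y' b =
           (al * dot y2 b + - ga * dot y2 am) / al.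
    by rewrite /ga; field; rewrite gt_eqF.
  move: Hyb; rewrite Hya e => Hyb.
  have : (al * dot y2 b + - ga * dot y2 am) / al * al <= 0.
    by apply: mulr_le0_ge0 => //; apply: ltW.
  by rewrite divfK // gt_eqF.
pose c := (ga - \sum_i rho i * dot y' (a' i)) / al.
exists (fun i : 'I_m.+1 => if unlift ord_max i is Some j then rho j else c).
split.
  move=> i; case: unliftP => [j _|_] //.
  have Hs : \sum_i rho i * dot y' (a' i) <= 0.
    by apply: sumr_le0 => i0 _; apply: mulr_ge0_le0.
  rewrite /c divr_ge0 // ?ltW //; rewrite -/ga in Hy'2; lra.
move=> t; rewrite big_ord_recr /= unlift_none.
have -> : \sum_(i < m) (if unlift ord_max (widen_ord (leqnSn m) i) is Some j
            then rho j else c) * a (widen_ord (leqnSn m) i) t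
          = \sum_(i < m) rho i * a' i t.
  apply: eq_bigr => i _.
  by rewrite /a' widen_lift liftK.
have := Hrho t; rewrite /b2 /a2.
under eq_bigr => i _ do rewrite mulrDr.
set S1 := \sum_i rho i * a' i t.
set S2 := \sum_i rho i * dot y' (a' i).
have E : \sum_i (rho i * (al * a' i t) + rho i * (- dot y' (a' i) * am t))
    = al * S1 - S2 * am t.
  rewrite big_split /= /S1 /S2 mulr_sumr mulr_suml -sumrN.
  by congr (_ + _); apply: eq_bigr => i _; ring.
rewrite E => Ht.
have Hal0 : al != 0 by rewrite gt_eqF.
have H2 : al * b t = al * S1 - S2 * am t + ga * am t by rewrite -Ht; ring.
apply: (mulfI Hal0).
rewrite mulrDr H2 /c -/S2.
have -> : al * ((ga - S2) / al * am t) = (ga - S2) * am t.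
  by rewrite mulrCA mulrA divfK.
rewrite mulrBl. move: (al * S1) (S2 * am t) (ga * am t) => x1 x2 x3. rewrite -addrA [- x2 + x3]addrC addrA. done.
Qed.

Lemma CS (R : rcfType) T (P : pred 'I_T) (l m : 'I_T -> R) :
  \sum_(t | P t) m t ^+ 2 <= 1 ->
  \sum_(t | P t) l t * m t <= Num.sqrt (\sum_(t | P t) l t ^+ 2).
Proof.
move=> Hm.
have Hl0 : 0 <= \sum_(t | P t) l t ^+ 2 by apply: sumr_ge0 => t _; exact: sqr_ge0.
set L := Num.sqrt _.
have L0 : 0 <= L by exact: sqrtr_ge0.
have HL2 : L ^+ 2 = \sum_(t | P t) l t ^+ 2 by rewrite sqr_sqrtr.
have [Lz|Lnz] := eqVneq L 0.
  have Hs0 : \sum_(t | P t) l t ^+ 2 = 0 by rewrite -HL2 Lz expr0n.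
  rewrite big1 // => t Pt.
  have := psumr_eq0P (fun i _ => sqr_ge0 (l i)) Hs0 Pt.
  by move/eqP; rewrite sqrf_eq0 => /eqP ->; rewrite mul0r.
have Lp : 0 < L by rewrite lt_def Lnz L0.
have H1 : \sum_(t | P t) (2 * L) * (l t * m t) <=
          \sum_(t | P t) (l t ^+ 2 + L ^+ 2 * m t ^+ 2).
  apply: ler_sum => t _.
  have := sqr_ge0 (l t - L * m t); nra.
rewrite -mulr_sumr big_split /= -mulr_sumr -HL2 in H1.
set X := \sum_(t | P t) l t * m t in H1 *.
set Y := \sum_(t | P t) m t ^+ 2 in H1 Hm.
nra.
Qed.

Lemma sub_sum_le (R : realDomainType) T (P : pred 'I_T) (F : 'I_T -> R) :
  (forall t, 0 <= F t) -> \sum_(t | P t) F t <= \sum_t F t.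
Proof.
move=> H; rewrite big_mkcond /=; apply: ler_sum => t _.
by case: (P t).
Qed.

Arguments sub_sum_le {R T} P {F}.

Lemma key_lemma (R : realType) T N (C : 'I_N -> seq 'I_T) (mu : 'I_T -> R) :
  dual_optimal C mu ->
  forall y : 'I_T -> R,
  (forall c, \sum_(t | t \in C c) mu t ^+ 2 = 1 ->
      \sum_(t | t \in C c) mu t * y t <= 0) ->
  \sum_t y t <= 0.
Proof.
move=> [[mu0 muC] muopt] y Hy.
rewrite leNgt; apply/negP => Y0.
set Y := \sum_t y t in Y0.
set M := \sum_t mu t.
have M0 : 0 <= M by apply: sumr_ge0.
set K := 1 + \sum_t y t ^+ 2.
have K1 : 1 <= K by rewrite /K lerDl; apply: sumr_ge0 => t _; exact: sqr_ge0.
set s := fun c => \sum_(t | t \in C c) mu t ^+ 2.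
set p := fun c => \sum_(t | t \in C c) mu t * y t.
set q := fun c => \sum_(t | t \in C c) y t ^+ 2.
have s0 : forall c, 0 <= s c by move=> c; apply: sumr_ge0 => t _; exact: sqr_ge0.
have qK : forall c, q c <= K.
  move=> c; apply: le_trans (sub_sum_le (fun t => t \in C c) (fun t => sqr_ge0 (y t))) _.
  by rewrite /K lerDr.
pose e := fun c => if s c == 1 then 1 else (1 - s c) / (2 * `|p c| + 1).
have e0 : forall c, 0 < e c <= 1.
  move=> c; rewrite /e; case: eqP => [_|ne]; first by rewrite ltr01 lexx.
  have sl : s c < 1 by rewrite lt_neqAle; apply/andP; split; [apply/eqP|apply: muC].
  have hp : 0 <= `|p c| by [].
  have hs := s0 c.
  apply/andP; split.
    by apply: divr_gt0; lra.
  rewrite ler_pdivrMr; lra.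
pose e0' := Y / (Y + K * M + 1).
have KM0 : 0 <= K * M by apply: mulr_ge0 => //; lra.
have e0'p : 0 < e0' by apply: divr_gt0; lra.
have e0'1 : e0' <= 1 by rewrite ler_pdivrMr; lra.
pose eps := e0' * \prod_c e c.
have Pi0 : 0 < \prod_c e c by apply: prodr_gt0 => c _; case/andP: (e0 c).
have Pi1 : \prod_c e c <= 1.
  apply: prodr_ile1 => c _; case/andP: (e0 c) => h1 h2; by rewrite h2 andbT ltW.
have epsp : 0 < eps by apply: mulr_gt0.
have epse0 : eps <= e0' by have := ler_wpM2l (ltW e0'p) Pi1; rewrite mulr1.
have epsc : forall c, eps <= e c.
  move=> c; rewrite /eps (bigD1 c) //=.
  set P' := \prod_(j | j != c) e j.
  have hP1 : P' <= 1.
    apply: prodr_ile1 => j _; case/andP: (e0 j) => h1 h2; by rewrite h2 andbT ltW.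
  have hP0 : 0 <= P' by apply: prodr_ge0 => j _; case/andP: (e0 j) => h1 _; apply: ltW.
  case/andP: (e0 c) => h1 h2.
  have hA : e0' * (e c * P') <= e c * P'.
    by rewrite -[X in _ <= X](mul1r (e c * P')) ler_wpM2r // mulr_ge0 // ltW.
  have hB : e c * P' <= e c by rewrite -[X in _ <= X](mulr1 (e c)) ler_wpM2l // ltW.
  exact: le_trans hA hB.
pose nu := fun t => if 0 <= mu t + eps * y t then mu t + eps * y t else 0.
pose al := (1 + eps ^+ 2 * K)^-1.
have alp : 0 < al by rewrite invr_gt0; nra.
pose mu' := fun t => al * nu t.
have nu0 : forall t, 0 <= nu t by move=> t; rewrite /nu; case: ifP.
have nu2 : forall t, nu t ^+ 2 <= (mu t + eps * y t) ^+ 2.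
  by move=> t; rewrite /nu; case: ifP => _; rewrite ?lexx ?expr0n ?sqr_ge0.
have nuge : forall t, mu t + eps * y t <= nu t.
  by move=> t; rewrite /nu; case: ifP => // /negbT; rewrite -ltNge => /ltW.
have feas : dual_feasible C mu'.
  split; first by move=> t; apply: mulr_ge0; [apply: ltW|].
  move=> c.
  have E1 : \sum_(t | t \in C c) mu' t ^+ 2 = al ^+ 2 * \sum_(t | t \in C c) nu t ^+ 2.
    by rewrite mulr_sumr; apply: eq_bigr => t _; rewrite /mu' exprMn.
  have E2 : \sum_(t | t \in C c) (mu t + eps * y t) ^+ 2 = s c + 2 * eps * p c + eps ^+ 2 * q c.
    rewrite /s /p /q !mulr_sumr -!big_split /=; apply: eq_bigr => t _; ring.
  have H3 : \sum_(t | t \in C c) nu t ^+ 2 <= s c + 2 * eps * p c + eps ^+ 2 * q c.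
    by rewrite -E2; apply: ler_sum => t _.
  have H4 : s c + 2 * eps * p c + eps ^+ 2 * q c <= 1 + eps ^+ 2 * K.
    have hq : eps ^+ 2 * q c <= eps ^+ 2 * K by rewrite ler_wpM2l ?sqr_ge0.
    case: (eqVneq (s c) 1) => [hs|hs].
      have := Hy c hs; rewrite -/(p c) => hp.
      have : 0 <= eps by apply: ltW.
      rewrite hs; nra.
    have sl : s c < 1 by rewrite lt_neqAle hs muC.
    have ec : e c = (1 - s c) / (2 * `|p c| + 1) by rewrite /e (negbTE hs).
    have h5 : 2 * eps * p c <= 2 * eps * `|p c|.
      by rewrite ler_wpM2l ?ler_norm // mulr_ge0 // ltW.
    have h6 : eps * (2 * `|p c| + 1) <= 1 - s c.
      rewrite -ler_pdivlMr; first by rewrite -ec epsc.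
      have : 0 <= `|p c| by []. lra.
    have : 0 <= `|p c| by [].
    have : 0 <= eps by apply: ltW.
    nra.
  rewrite E1.
  have h7 : al ^+ 2 * \sum_(t | t \in C c) nu t ^+ 2 <= al ^+ 2 * (1 + eps ^+ 2 * K).
    rewrite ler_wpM2l ?sqr_ge0 //; lra.
  apply: le_trans h7 _.
  have hx : 0 <= eps ^+ 2 * K by rewrite mulr_ge0 ?sqr_ge0 //; lra.
  rewrite /al expr2 -mulrA mulVf ?mulr1.
    rewrite invr_le1 //; try lra.
    by rewrite unitfE; apply/negP => /eqP h; lra.
  apply/negP => /eqP h; lra.
have := muopt mu' feas.
have H8 : al * (M + eps * Y) <= \sum_t mu' t.
  rewrite /mu' -mulr_sumr; apply: ler_wpM2l; first exact: (ltW alp).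
  rewrite /M /Y mulr_sumr -big_split /=; apply: ler_sum => t _; exact: nuge.
have H9 : M < al * (M + eps * Y).
  have hd : 0 < 1 + eps ^+ 2 * K by nra.
  rewrite /al mulrC ltr_pdivlMr //.
  have : eps * (K * M) < Y.
    apply: le_lt_trans (_ : e0' * (K * M) < Y).
      by rewrite ler_wpM2r.
    rewrite /e0' mulrC mulrA ltr_pdivrMr; nra.
  nra.
move=> h; have := lt_le_trans H9 (le_trans H8 h); by rewrite ltxx.
Qed.

Theorem lemma3 (R : realType) (T : nat) (S : 'I_T -> {set 'I_T})
  (N : nat) (C : 'I_N -> seq 'I_T)
  (HS : temporal_feedback_graph S)
  (HCinj : injective C)
  (HCall : forall s : seq 'I_T, maximal_order S s <-> exists c : 'I_N, C c = s)
  (mu : 'I_T -> R) (Hmu : dual_optimal C mu) :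
  exists lam : 'I_N -> 'I_T -> R,
    primal_optimal C lam /\
    (forall c : 'I_N,
       \sum_(t : 'I_T | t \in C c) mu t ^+ 2 < 1 -> forall t : 'I_T, lam c t = 0) /\
    (forall c : 'I_N,
       \sum_(t : 'I_T | t \in C c) mu t ^+ 2 = 1 ->
       exists rho : R, forall t : 'I_T, t \in C c -> lam c t = rho * mu t).
Proof.
have Hmu' := Hmu; move: Hmu => [[mu0 muC] muopt].
pose s := fun c => \sum_(t | t \in C c) mu t ^+ 2.
pose a := fun c t => if (s c == 1) && (t \in C c) then mu t else 0.
have a0 : forall c t, 0 <= a c t by move=> c t; rewrite /a; case: ifP.
have aout : forall c t, t \notin C c -> a c t = 0.
  by move=> c t /negbTE h; rewrite /a h andbF.
have aslack : forall c t, s c != 1 -> a c t = 0.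
  by move=> c t /negbTE h; rewrite /a h.
have atight : forall c t, s c = 1 -> t \in C c -> a c t = mu t.
  by move=> c t h1 h2; rewrite /a h1 eqxx h2.
have key : forall y : 'I_T -> R, (forall c, dot y (a c) <= 0) -> dot y (fun _ => 1) <= 0.
  move=> y Hy.
  have -> : dot y (fun _ => 1) = \sum_t y t by apply: eq_bigr => t _; rewrite mulr1.
  apply: (@key_lemma _ _ _ _ _ Hmu') => c hc.
  have := Hy c; rewrite /dot.
  have -> : \sum_t y t * a c t = \sum_(t | t \in C c) mu t * y t.
    rewrite [RHS]big_mkcond /=; apply: eq_bigr => t _.
    case: (boolP (t \in C c)) => ht.
      by rewrite atight // mulrC.
    by rewrite aout // mulr0.
  done.
have [rho [rho0 Hrho]] := @farkas R T N a (fun _ => 1) key.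
exists (fun c t => rho c * a c t).
have sum_a : forall c, \sum_t rho c * a c t * mu t = Num.sqrt (\sum_(t | t \in C c) (rho c * a c t) ^+ 2).
  move=> c; case: (eqVneq (s c) 1) => hs.
    have E1 : \sum_(t | t \in C c) (rho c * a c t) ^+ 2 = rho c ^+ 2.
      rewrite -[RHS]mulr1 -hs /s mulr_sumr; apply: eq_bigr => t ht.
      by rewrite atight // exprMn.
    rewrite E1 sqrtr_sqr ger0_norm //.
    rewrite -[RHS]mulr1 -hs /s mulr_sumr [RHS]big_mkcond /=; apply: eq_bigr => t _.
    case: (boolP (t \in C c)) => ht.
      by rewrite atight // expr2 mulrA.
    by rewrite aout // mulr0 mul0r.
  rewrite big1; last by move=> t _; rewrite aslack // mulr0 mul0r.
  rewrite big1 ?sqrtr0 // => t _; rewrite aslack // mulr0 expr0n.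
  done.
split; last split.
- split.
    split; first by move=> t; rewrite -Hrho.
    split; first by move=> c t ht; rewrite aout // mulr0.
    by move=> c t; apply: mulr_ge0.
  move=> lam' [Hl1 [Hl2 Hl3]].
  have -> : primal_obj C (fun c t => rho c * a c t) = \sum_t mu t.
    rewrite /primal_obj.
    under eq_bigr => c _ do rewrite -sum_a.
    rewrite exchange_big /=; apply: eq_bigr => t _.
    by rewrite -mulr_suml -Hrho mul1r.
  have -> : \sum_t mu t = \sum_c \sum_(t | t \in C c) lam' c t * mu t.
    transitivity (\sum_c \sum_t lam' c t * mu t).
      rewrite exchange_big /=; apply: eq_bigr => t _.
      by rewrite -mulr_suml Hl1 mul1r.
    apply: eq_bigr => c _; rewrite [RHS]big_mkcond /=; apply: eq_bigr => t _.
    case: (boolP (t \in C c)) => ht //.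
    by rewrite Hl2 // mul0r.
  rewrite /primal_obj; apply: ler_sum => c _; apply: CS; exact: muC.
- move=> c hc t; rewrite aslack ?mulr0 //; by rewrite /s (lt_eqF hc).
- move=> c hc; exists (rho c) => t ht; rewrite atight //.
Qed.
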